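(* Let $n$ be a positive integer and let $A(n)=(a_{ij})_{i,j\in\mathbb{N}}$ be the greedy matrix described in the context. For each $i\geq 1$ let $g(i)$ be the smallest $j$ such that $a_{ij}=1$. Then $g$ is monotonically increasing, i.e. $g(i+1)\geq g(i)$ for all $i\ge 1$.
   Context: $\mathbb{N}=\{1,2,3,\dots\}$. Fix a positive integer $n$. The infinite $\{0,1\}$-matrix $A(n)=(a_{ij})_{i,j\in\mathbb{N}}$ is defined recursively. Its entries are determined row by row (row $1$ first), and within each row from left to right, so that $a_{kl}$ is determined after all $a_{ij}$ with $i<k$ and all $a_{kj}$ with $j<l$. One sets $a_{kl}=1$ if and only if all of the following hold: (1) $\sum_{j<l}a_{kj}<n+1$; (2) $\sum_{i<k}a_{il}<n+1$; (3) there is no pair $(i,j)$ with $1\le i<k$, $1\le j<l$ and $a_{ij}=a_{il}=a_{kj}=1$. Otherwise $a_{kl}=0$. *)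

(* Defs.v *)
From mathcomp Require Import all_boot.
Set Implicit Arguments. Unset Strict Implicit. Unset Printing Implicit Defensive.

(* Indices are 1-based (rows/columns in {1,2,...});
   index 0 is unused and the entry there is set to false.
   The entry a_{kl} depends only on entries (i,j) with i <= k, j <= l,
   (i,j) <> (k,l), all of which have strictly smaller i + j.  We therefore
   compute it by recursion on a fuel s >= k + l. *)

Definition greedy_rule (n : nat) (b : nat -> nat -> bool) (k l : nat) : bool :=
  [&& (\sum_(1 <= j < l) b k j < n.+1)%N,
      (\sum_(1 <= i < k) b i l < n.+1)%N &
      ~~ has (fun i => has (fun j => [&& b i j, b i l & b k j]) (iota 1 l.-1))
             (iota 1 k.-1)].

Fixpoint greedy_aux (n s : nat) (k l : nat) : bool :=
  match s with
  | 0 => false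
  | s'.+1 => [&& 0 < k, 0 < l & greedy_rule n (greedy_aux n s') k l]
  end.

(* a n k l  is the entry a_{kl} of A(n) (true = 1, false = 0). *)
Definition greedyA (n k l : nat) : bool := greedy_aux n (k + l) k l.

(* Main.v *)
Require Import Defs.
From mathcomp Require Import all_boot.
From mathcomp Require Import zify.

Lemma rule_congr n (b1 b2 : nat -> nat -> bool) k l :
  (forall i j, i + j < k + l -> b1 i j = b2 i j) ->
  greedy_rule n b1 k l = greedy_rule n b2 k l.
Proof.
move=> H; rewrite /greedy_rule.
congr [&& _ , _ & _].
- by rewrite (@eq_big_nat _ 0 addn 1 l _ (fun j => nat_of_bool (b2 k j))) // => j /andP[_ hj]; rewrite H // ltn_add2l.
- by rewrite (@eq_big_nat _ 0 addn 1 k _ (fun i => nat_of_bool (b2 i l))) // => i /andP[_ hi]; rewrite H // ltn_add2r.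
- congr negb; apply: eq_in_has => i; rewrite mem_iota => /andP[hi1 hi].
  apply: eq_in_has => j; rewrite mem_iota => /andP[hj1 hj].
  rewrite !H //; lia.
Qed.

Lemma fuel_indep n s1 s2 k l : k + l <= s1 -> k + l <= s2 ->
  greedy_aux n s1 k l = greedy_aux n s2 k l.
Proof.
elim: s1 s2 k l => [|s1 IH] [|s2] k l //=.
- rewrite leqn0 addn_eq0 => /andP[/eqP -> _] //.
- rewrite leqn0 addn_eq0 => _ /andP[/eqP -> _] //.
- move=> h1 h2.
  case: k h1 h2 => [|k] //; case: l => [|l] //= h1 h2.
  apply: rule_congr => i j hij; apply: IH.
  + by rewrite -ltnS; apply: leq_trans hij h1.
  + by rewrite -ltnS; apply: leq_trans hij h2.
Qed.

Lemma a_pos n k l : greedyA n k l -> 0 < k /\ 0 < l.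
Proof. by rewrite /greedyA; case: (k + l) => //= s /and3P[]. Qed.
Arguments a_pos {n k l}.

Lemma a_unfold n k l : 0 < k -> 0 < l ->
  greedyA n k l = greedy_rule n (greedyA n) k l.
Proof.
move=> hk hl; rewrite /greedyA.
have : 0 < k + l by rewrite addn_gt0 hk.
case E: (k + l) => [|s] //= _; rewrite hk hl /=.
apply: rule_congr => i j hij; apply: fuel_indep => //.
by rewrite -ltnS -E.
Qed.

Lemma row_bound n i L : \sum_(1 <= j < L) greedyA n i j <= n.+1.
Proof.
elim: L => [|L IH]; first by rewrite big_geq.
case: L IH => [|L] IH; first by rewrite big_geq.
rewrite big_nat_recr //=.
case E: (greedyA n i L.+1); last by rewrite addn0.
have [hi _] := a_pos E.
move: E; rewrite a_unfold // /greedy_rule => /and3P[h _ _].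
by rewrite addn1.
Qed.

Lemma sum_zero m k F : \sum_(m <= i < k) F i = 0 -> forall i, m <= i < k -> F i = 0.
Proof.
move=> /eqP; rewrite sum_nat_seq_eq0 => /allP H i hi.
by apply/eqP; have := H i; rewrite mem_index_iota hi => /(_ isT).
Qed.

Arguments sum_zero {m k F}.
Lemma sum_is_zero m k (F : nat -> nat) : (forall i, m <= i < k -> F i = 0) -> \sum_(m <= i < k) F i = 0.
Proof. move=> H; rewrite (eq_big_nat _ _ H); by rewrite sum_nat_const_nat muln0. Qed.

Theorem lemma3p2 (n : nat) (hn : 0 < n) :
  (forall i, 0 < i -> exists j, 0 < j /\ greedyA n i j) /\
  (forall i j1 j2, 0 < i ->
     greedyA n i j1 -> (forall j, 0 < j < j1 -> ~~ greedyA n i j) ->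
     greedyA n i.+1 j2 -> (forall j, 0 < j < j2 -> ~~ greedyA n i.+1 j) ->
     j1 <= j2).
Proof.
split.
- move=> k hk.
  set L := (k.-1 * n.+1).+1.
  set col := fun j => \sum_(1 <= i < k) greedyA n i j.
  have hsum : \sum_(1 <= j < L.+1) col j <= k.-1 * n.+1.
    rewrite /col exchange_big_nat /=.
    apply: leq_trans (_ : \sum_(1 <= i < k) n.+1 <= _).
      by apply: leq_sum => i _; apply: row_bound.
    by rewrite sum_nat_const_nat subn1.
  have [j hj hc] : exists2 j, 1 <= j < L.+1 & col j = 0.
    case Eh: (has (fun j => col j == 0) (index_iota 1 L.+1)).
      by case/hasP: Eh => j; rewrite mem_index_iota => hj /eqP hc; exists j.
    exfalso; move: hsum; apply/negP; rewrite -ltnNge.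
    apply: leq_trans (_ : \sum_(1 <= j < L.+1) 1 <= _).
      by rewrite sum_nat_const_nat subn1 muln1.
    rewrite big_nat_cond [X in _ <= X]big_nat_cond.
    apply: leq_sum => i /andP[hi _]; rewrite lt0n.
    apply: contraT; rewrite negbK => hc.
    move/hasPn: Eh => /(_ i); rewrite mem_index_iota hi => /(_ isT).
    by rewrite hc.
  case Er: (has (greedyA n k) (iota 1 j)).
    by case/hasP: Er => j'; rewrite mem_iota => /andP[hj' _] h; exists j'.
  exists j; split; first by case/andP: hj.
  have hj0 : 0 < j by case/andP: hj.
  rewrite a_unfold // /greedy_rule.
  have hc' := sum_zero hc.
  apply/and3P; split.
  + rewrite sum_is_zero // => j' /andP[h1 h2].
    move/hasPn: Er => /(_ j'); rewrite mem_iota h1 /= => /(_ (leq_trans h2 (leq_addl _ _))).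
    by move/negbTE => ->.
  + by move: hc; rewrite /col => ->.
  + apply/hasPn => i; rewrite mem_iota => /andP[h1 h2].
    have hik : i < k by move: h2; case: (k) hk => //= k' _; rewrite add1n ltnS.
    apply/hasPn => j' _.
    have := hc' i; rewrite h1 hik => /(_ isT).
    by case: (greedyA n i j) => //; rewrite andbF.
- move=> i j1 j2 hi h1 m1 h2 m2.
  rewrite leqNgt; apply/negP => hlt.
  have [_ hj2] := a_pos h2.
  have z : greedyA n i j2 = false by apply/negbTE/m1; rewrite hj2.
  move: z; rewrite a_unfold // /greedy_rule.
  have s0 : \sum_(1 <= j < j2) greedyA n i j = 0.
    apply: sum_is_zero => j /andP[a b].
    by rewrite (negbTE (m1 j _)) // a (ltn_trans b hlt).
  rewrite s0 /=.
  have hh : ~~ has (fun i0 => has (fun j => [&& greedyA n i0 j, greedyA n i0 j2 & greedyA n i j]) (iota 1 j2.-1)) (iota 1 i.-1).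
    apply/hasPn => i' _; apply/hasPn => j; rewrite mem_iota => /andP[a b].
    have hj : j < j2 by move: b; case: (j2) hj2 => //= j2' _; rewrite add1n ltnS.
    by rewrite (negbTE (m1 j _)) ?andbF // a (ltn_trans hj hlt).
  rewrite hh andbT => /negbT; rewrite -leqNgt => big.
  move: h2; rewrite a_unfold // /greedy_rule => /and3P[_ h _].
  move: h; rewrite big_nat_recr //; apply/negP; rewrite -leqNgt.
  by apply: leq_trans big (leq_addr _ _).
Qed.
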